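(* Let $E=\{ax^4+by^4+cx^2y^2:a,b,c\in\mathbb{R}\}$ with the sup norm over $[-1,1]^2$. Then $$D_{\mathbb{R},4}(E):=\sup\left\{\frac{(|a|^{8/5}+|b|^{8/5}+|c|^{8/5})^{5/8}}{\|ax^4+by^4+cx^2y^2\|}:(a,b,c)\neq0\right\}=\left(2+3^{8/5}\right)^{5/8}\approx3.610,$$ attained at $\pm(x^4+y^4-3x^2y^2)$. In particular $D_{\mathbb{R},4}\ge D_{\mathbb{R},4}(\ell_\infty^2)\ge(2+3^{8/5})^{5/8}\approx3.610$.
   Context: $\ell_\infty^n$ is $\mathbb{R}^n$ with the sup norm; for a polynomial $P$ on $\ell_\infty^n$, $\|P\|=\sup_{x\in[-1,1]^n}|P(x)|$. For $P(x)=\sum_{|\alpha|=m}a_\alpha x^\alpha$, $D_{\mathbb{R},m}(\ell_\infty^n)=\sup\{(\sum_{|\alpha|=m}|a_\alpha|^{\frac{2m}{m+1}})^{\frac{m+1}{2m}}/\|P\|: P\ne 0 \text{ real $m$-homogeneous on }\ell_\infty^n\}$ and $D_{\mathbb{R},m}=\sup_nD_{\mathbb{R},m}(\ell_\infty^n)$ is the optimal constant in the real polynomial Bohnenblust–Hille inequality. *)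

(* Defs.v *)
From Stdlib Require Import Reals Lra List.
Import ListNotations.
Open Scope R_scope.

(* t^p for t >= 0, p > 0, with the convention 0^p = 0
   (Stdlib's Rpower 0 p = 1, which is the wrong convention). *)
Definition rpow (t p : R) : R :=
  if Req_EM_T t 0 then 0 else Rpower t p.

Definition sup_norm2_is (f : R -> R -> R) (N : R) : Prop :=
  is_lub (fun v => exists x y, Rabs x <= 1 /\ Rabs y <= 1 /\ v = Rabs (f x y)) N.

Definition polyE (a b c : R) (x y : R) : R :=
  a * x ^ 4 + b * y ^ 4 + c * x ^ 2 * y ^ 2.

Definition lp_norm3 (p a b c : R) : R :=
  rpow (rpow (Rabs a) p + rpow (Rabs b) p + rpow (Rabs c) p) (/ p).

Definition DE_set : R -> Prop :=
  fun r => exists a b c N, (a, b, c) <> (0, 0, 0) /\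
    sup_norm2_is (polyE a b c) N /\ r = lp_norm3 (8/5) a b c / N.

(* multi-indices alpha in N^n with |alpha| = m, as lists of length n *)
Fixpoint multi_indices (n m : nat) : list (list nat) :=
  match n with
  | O => match m with O => [[]] | S _ => [] end
  | S n' => flat_map (fun k => map (cons k) (multi_indices n' (m - k)))
                     (seq 0 (S m))
  end.

Fixpoint monom (x : list R) (alpha : list nat) : R :=
  match x, alpha with
  | xi :: xs, k :: ks => xi ^ k * monom xs ks
  | _, _ => 1
  end.

Definition sumR (l : list R) : R := fold_right Rplus 0 l.

Definition hpoly (n m : nat) (a : list nat -> R) (x : list R) : R :=
  sumR (map (fun al => a al * monom x al) (multi_indices n m)).

Definition sup_norm_is (n : nat) (f : list R -> R) (N : R) : Prop :=
  is_lub (fun v => exists x, length x = n /\ Forall (fun t => Rabs t <= 1) x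
                             /\ v = Rabs (f x)) N.

Definition D_set (m n : nat) : R -> Prop :=
  fun r => exists (a : list nat -> R) N,
    (exists al, In al (multi_indices n m) /\ a al <> 0) /\
    sup_norm_is n (hpoly n m a) N /\
    r = rpow (sumR (map (fun al => rpow (Rabs (a al)) (2 * INR m / (INR m + 1)))
                        (multi_indices n m)))
             ((INR m + 1) / (2 * INR m)) / N.

(* ratios defining D_{R,m} = sup_n D_{R,m}(l_infty^n) *)
Definition D_all_set (m : nat) : R -> Prop :=
  fun r => exists n, D_set m n r.

Definition C4 : R := rpow (2 + rpow 3 (8/5)) (5/8).

(* Main.v *)
Require Import Defs.
From Stdlib Require Import Reals List Lra.
Import ListNotations.
Open Scope R_scope.

Lemma Rabs_le_inv x b : Rabs x <= b -> -b <= x <= b.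
Proof. intros; unfold Rabs in *; destruct (Rcase_abs x); lra. Qed.

Lemma rpow_0 p : rpow 0 p = 0.
Proof. unfold rpow; destruct (Req_EM_T 0 0); lra. Qed.

Lemma rpow_pos t p : 0 < t -> rpow t p = Rpower t p.
Proof. intro; unfold rpow; destruct (Req_EM_T t 0); [lra|reflexivity]. Qed.

Lemma rpow_1 p : rpow 1 p = 1.
Proof. rewrite rpow_pos by lra. unfold Rpower. rewrite ln_1, Rmult_0_r. apply exp_0. Qed.

Lemma rpow_nonneg t p : 0 <= t -> 0 <= rpow t p.
Proof. intro; unfold rpow; destruct (Req_EM_T t 0); [lra|].
 unfold Rpower; left; apply exp_pos. Qed.

Lemma rpow_gt0 t p : 0 < t -> 0 < rpow t p.
Proof. intro; rewrite rpow_pos by lra; unfold Rpower; apply exp_pos. Qed.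

Lemma rpow_le t u p : 0 <= t -> t <= u -> 0 < p -> rpow t p <= rpow u p.
Proof. intros. destruct (Req_EM_T t 0). subst; rewrite rpow_0; apply rpow_nonneg; lra.
 rewrite !rpow_pos by lra. apply Rle_Rpower_l; lra. Qed.

Lemma rpow_mul x y p : 0 < x -> 0 < y -> rpow (x*y) p = rpow x p * rpow y p.
Proof. intros. rewrite !rpow_pos by (try apply Rmult_lt_0_compat; lra).
 symmetry; apply Rpower_mult_distr; lra. Qed.

Lemma rpow_inv x p : 0 < x -> p <> 0 -> rpow (rpow x p) (/p) = x.
Proof. intros. rewrite (rpow_pos x) by lra. rewrite rpow_pos.
 rewrite Rpower_mult, Rinv_r by lra. apply Rpower_1; lra.
 unfold Rpower; apply exp_pos. Qed.

Lemma Cval : lp_norm3 (8/5) 1 1 (-3) = C4.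
Proof. unfold lp_norm3, C4. rewrite Rabs_R1. replace (Rabs (-3)) with 3 by (rewrite Rabs_left; lra).
 rewrite rpow_1. replace (/(8/5)) with (5/8) by field. f_equal; lra. Qed.

Lemma Cval' : lp_norm3 (8/5) (-1) (-1) 3 = C4.
Proof. rewrite <- Cval. unfold lp_norm3.
 replace (Rabs (-1)) with 1 by (rewrite Rabs_left; lra).
 replace (Rabs (-3)) with 3 by (rewrite Rabs_left; lra).
 replace (Rabs 3) with 3 by (rewrite Rabs_right; lra).
 rewrite Rabs_R1. reflexivity. Qed.

Lemma poly_bound x y : Rabs x <= 1 -> Rabs y <= 1 ->
  Rabs (x ^ 4 + y ^ 4 - 3 * x ^ 2 * y ^ 2) <= 1.
Proof. intros Hx Hy.
 assert (Hs : 0 <= x^2 <= 1). { split. nra. apply Rabs_le_inv in Hx. nra. }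
 assert (Ht : 0 <= y^2 <= 1). { split. nra. apply Rabs_le_inv in Hy. nra. }
 set (s := x^2) in *. set (t := y^2) in *.
 replace (x^4) with (s*s) by (unfold s; ring).
 replace (y^4) with (t*t) by (unfold t; ring).
 replace (3 * x^2 * y^2) with (3*s*t) by (unfold s,t; ring).
 assert (s*t <= 1) by (apply Rle_trans with (1*1); [apply Rmult_le_compat|]; lra). pose proof (Rle_0_sqr (s-t)); unfold Rsqr in *.
 apply Rabs_le. split. nra.
 destruct (Rle_dec t s); nra. Qed.

Lemma sup1 : sup_norm2_is (polyE 1 1 (-3)) 1.
Proof. split.
 - intros v [x [y [Hx [Hy ->]]]]. unfold polyE.
   replace (1 * x ^ 4 + 1 * y ^ 4 + -3 * x ^ 2 * y ^ 2) with
     (x ^ 4 + y ^ 4 - 3 * x ^ 2 * y ^ 2) by ring. apply poly_bound; auto.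
 - intros b Hb. apply Hb. exists 1, 1. rewrite Rabs_R1. split; [lra|split;[lra|]].
   unfold polyE. replace (1 * 1 ^ 4 + 1 * 1 ^ 4 + -3 * 1 ^ 2 * 1 ^ 2) with (-1) by ring.
   replace (Rabs (-1)) with 1 by (rewrite Rabs_left; lra); reflexivity.
Qed.

Lemma sup1' : sup_norm2_is (polyE (-1) (-1) 3) 1.
Proof. split.
 - intros v [x [y [Hx [Hy ->]]]]. unfold polyE.
   replace (-1 * x ^ 4 + -1 * y ^ 4 + 3 * x ^ 2 * y ^ 2) with
     (- (x ^ 4 + y ^ 4 - 3 * x ^ 2 * y ^ 2)) by ring. rewrite Rabs_Ropp. apply poly_bound; auto.
 - intros b Hb. apply Hb. exists 1, 1. rewrite Rabs_R1. split; [lra|split;[lra|]].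
   unfold polyE. replace (-1 * 1 ^ 4 + -1 * 1 ^ 4 + 3 * 1 ^ 2 * 1 ^ 2) with 1 by ring.
   rewrite Rabs_R1; reflexivity.
Qed.

Lemma C4_in : DE_set C4.
Proof. exists 1, 1, (-3), 1. split. intro H; inversion H; lra.
 split. apply sup1. rewrite Cval. field. Qed.

Lemma upper : is_upper_bound DE_set C4.
Proof.
 intros r [a [b [c [N [Hne [[Hub _] ->]]]]]].
 assert (Ha : Rabs a <= N).
 { apply Hub. exists 1, 0. rewrite Rabs_R1, Rabs_R0. repeat split; try lra.
   f_equal; unfold polyE; ring. }
 assert (Hb : Rabs b <= N).
 { apply Hub. exists 0, 1. rewrite Rabs_R1, Rabs_R0. repeat split; try lra.
   f_equal; unfold polyE; ring. }
 assert (Habc : Rabs (a+b+c) <= N).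
 { apply Hub. exists 1, 1. rewrite Rabs_R1. repeat split; try lra.
   f_equal; unfold polyE; ring. }
 assert (Hc : Rabs c <= 3*N).
 { apply Rabs_le_inv in Ha; apply Rabs_le_inv in Hb; apply Rabs_le_inv in Habc.
   apply Rabs_le; lra. }
 pose proof (Rabs_pos a); pose proof (Rabs_pos b); pose proof (Rabs_pos c).
 assert (HN : 0 < N).
 { destruct (Rle_lt_dec N 0); auto. exfalso. apply Hne.
   assert (a = 0) by (apply Rabs_le_inv in Ha; lra).
   assert (b = 0) by (apply Rabs_le_inv in Hb; lra).
   assert (c = 0) by (apply Rabs_le_inv in Hc; lra). subst; reflexivity. }
 set (p := 8/5). assert (Hp : 0 < p) by (unfold p; lra).
 set (K := 2 + rpow 3 p).
 assert (HK : 0 < K) by (unfold K; pose proof (rpow_nonneg 3 p); lra).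
 assert (HS : rpow (Rabs a) p + rpow (Rabs b) p + rpow (Rabs c) p <= rpow N p * K).
 { pose proof (rpow_le _ _ p H Ha Hp). pose proof (rpow_le _ _ p H0 Hb Hp).
   pose proof (rpow_le _ _ p H1 Hc Hp). rewrite rpow_mul in H4 by lra.
   unfold K. lra. }
 unfold lp_norm3. fold p.
 apply Rmult_le_reg_r with N; auto.
 unfold Rdiv. rewrite Rmult_assoc, Rinv_l, Rmult_1_r by lra.
 eapply Rle_trans. apply rpow_le; [|exact HS|].
 pose proof (rpow_nonneg (Rabs a) p H); pose proof (rpow_nonneg (Rabs b) p H0);
 pose proof (rpow_nonneg (Rabs c) p H1); lra. apply Rinv_0_lt_compat; lra.
 rewrite rpow_mul by (try apply rpow_gt0; lra).
 rewrite rpow_inv by lra. unfold C4. replace (5/8) with (/p) by (unfold p; field).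
 fold p K. rewrite Rmult_comm; apply Rle_refl.
Qed.

Definition acoef (al : list nat) : R :=
  match al with
  | [4%nat; 0%nat] => 1
  | [0%nat; 4%nat] => 1
  | [2%nat; 2%nat] => -3
  | _ => 0
  end.

Lemma D_in : D_set 4 2 C4.
Proof.
 exists acoef, 1. split. exists [4%nat;0%nat]. split. simpl; tauto. simpl; lra.
 split.
 - split.
   + intros v [x [Hl [Hf ->]]]. destruct x as [|x [|y [|]]]; try discriminate.
     inversion Hf; subst. inversion H2; subst.
     replace (hpoly 2 4 acoef [x; y]) with (x ^ 4 + y ^ 4 - 3 * x ^ 2 * y ^ 2)
       by (unfold hpoly, sumR; simpl; ring).
     apply poly_bound; auto.
   + intros b Hb. apply Hb. exists [1;1]. split. reflexivity.
     split. repeat constructor; rewrite Rabs_R1; lra.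
     replace (hpoly 2 4 acoef [1; 1]) with (-1) by (unfold hpoly, sumR; simpl; ring).
     replace (Rabs (-1)) with 1 by (rewrite Rabs_left; lra); reflexivity.
 - unfold sumR; simpl. rewrite !Rabs_R0, Rabs_R1. replace (Rabs (-3)) with 3 by (rewrite Rabs_left; lra).
   rewrite !rpow_0, !rpow_1.
   replace (2 * (1+1+1+1) / ((1+1+1+1) + 1)) with (8/5) by field.
   replace (((1+1+1+1) + 1) / (2 * (1+1+1+1))) with (5/8) by field.
   unfold C4. rewrite Rdiv_1_r. f_equal. lra.
Qed.

Theorem mainTheorem9 :
  (* D_{R,4}(E) = (2 + 3^{8/5})^{5/8} *)
  is_lub DE_set C4 /\
  (* attained at +-(x^4 + y^4 - 3 x^2 y^2) *)
  (exists N, sup_norm2_is (polyE 1 1 (-3)) N /\ lp_norm3 (8/5) 1 1 (-3) / N = C4) /\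
  (exists N, sup_norm2_is (polyE (-1) (-1) 3) N /\ lp_norm3 (8/5) (-1) (-1) 3 / N = C4) /\
  (* D_{R,4}(l_infty^2) >= C4 *)
  (forall U, is_upper_bound (D_set 4 2) U -> C4 <= U) /\
  (* D_{R,4} >= C4 *)
  (forall U, is_upper_bound (D_all_set 4) U -> C4 <= U).
Proof.
 split. split. apply upper. intros b Hb; apply Hb, C4_in.
 split. exists 1; split. apply sup1. rewrite Cval; field.
 split. exists 1; split. apply sup1'. rewrite Cval'; field.
 split. intros U HU; apply HU, D_in.
 intros U HU; apply HU. exists 2%nat. apply D_in.
Qed.
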